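(* Let $S$ be a finite set, $N\ge1$, $\mathcal X=S^N$, $\mu$ uniform on $\mathcal X$, and let $P$ be a coordinate-replacement kernel $Pf(x)=\frac1N\sum_{i=1}^N\sum_{u\in S}K_i(x_{-i};x_i,u)f(x^{i,u})$, reversible with respect to $\mu$, with a $P$-invariant set $\Omega\subseteq\mathcal X$, $\mu(\Omega)>0$. Let $G\subseteq\Omega$. Suppose there is $\gamma>0$ such that for every coordinate $i$ and every $x_{-i}$ whose $i$-fibre $\{x^{i,u}:u\in S\}$ intersects $G$, the fibre kernel $K_i(x_{-i})$ has spectral gap at least $\gamma$ with respect to the uniform measure on $S$. Then every nonnegative $F:\mathcal X\to\mathbb R$ with $\operatorname{supp}(F)\subseteq G$ satisfies \[ \operatorname{Ent}_\mu(F^2)\le C\frac{N\log|S|}{\gamma}\,\mathcal E_P^\mu(F,F), \] where $C<\infty$ is universal.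
   Context: For $x\in S^N$, $x^{i,u}$ is $x$ with coordinate $i$ replaced by $u$, and $x_{-i}=(x_1,\dots,x_{i-1},x_{i+1},\dots,x_N)$. In a coordinate-replacement kernel each $K_i(x_{-i})$ is a Markov kernel on $S$ reversible w.r.t. the uniform measure on $S$. $\Omega$ invariant means $P(x,y)=0$ for $x\in\Omega,y\notin\Omega$. $\operatorname{Ent}_\rho(f^2)=\rho(f^2\log f^2)-\rho(f^2)\log\rho(f^2)$; $\mathcal E^\rho_K(f,f)=\frac12\sum_{x,y}\rho(x)K(x,y)(f(x)-f(y))^2$. The spectral gap of a reversible kernel $K$ with stationary law $\rho$ is $1/C_P$, where $C_P$ is the smallest constant with $\operatorname{Var}_\rho(f)\le C_P\,\mathcal E^\rho_K(f,f)$ for all real $f$. *)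

(* Defs.v *)
From mathcomp Require Import all_boot all_order all_algebra.
From mathcomp Require Import all_classical all_reals all_analysis.
Set Implicit Arguments. Unset Strict Implicit. Unset Printing Implicit Defensive.
Import Order.TTheory GRing.Theory Num.Theory.
Local Open Scope ring_scope.

Section Defs.
Variable R : realType.

Definition config (S : finType) (N : nat) := {ffun 'I_N -> S}.

Definition repl (S : finType) (N : nat) (x : config S N) (i : 'I_N) (u : S)
  : config S N := [ffun j => if j == i then u else x j].

Definition unif (T : finType) (x : T) : R := (#|T|%:R)^-1.

Definition expect (T : finType) (rho : T -> R) (f : T -> R) : R :=
  \sum_(x : T) rho x * f x.

Definition variance (T : finType) (rho : T -> R) (f : T -> R) : R :=
  expect rho (fun x => (f x - expect rho f) ^+ 2).

Definition xlogx (t : R) : R := if t == 0 then 0 else t * ln t.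

Definition entropy (T : finType) (rho : T -> R) (g : T -> R) : R :=
  expect rho (fun x => xlogx (g x)) - xlogx (expect rho g).

Definition dirichlet (T : finType) (rho : T -> R) (K : T -> T -> R)
  (f : T -> R) : R :=
  2^-1 * \sum_(x : T) \sum_(y : T) rho x * K x y * (f x - f y) ^+ 2.

Definition markov_kernel (T : finType) (K : T -> T -> R) : Prop :=
  (forall x y, 0 <= K x y) /\ (forall x, \sum_(y : T) K x y = 1).

Definition reversible (T : finType) (rho : T -> R) (K : T -> T -> R) : Prop :=
  forall x y, rho x * K x y = rho y * K y x.

Definition poincare_const (T : finType) (rho : T -> R) (K : T -> T -> R)
  (C : R) : Prop :=
  forall f : T -> R, variance rho f <= C * dirichlet rho K f.

(* spectral gap = 1/C_P >= gamma (gamma > 0), i.e. C_P <= 1/gamma, i.e. 1/gamma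
   is an admissible Poincare constant (C_P being the smallest admissible one). *)
Definition spectral_gap_ge (T : finType) (rho : T -> R) (K : T -> T -> R)
  (gamma : R) : Prop := poincare_const rho K gamma^-1.

Definition coord_kernel (S : finType) (N : nat)
  (K : 'I_N -> config S N -> S -> S -> R) (x y : config S N) : R :=
  (N%:R)^-1 * \sum_(i < N) \sum_(u : S) K i x (x i) u * (y == repl x i u)%:R.

Definition depends_on_rest (S : finType) (N : nat)
  (K : 'I_N -> config S N -> S -> S -> R) : Prop :=
  forall i x w, K i (repl x i w) = K i x.

Definition invariant_set (T : finType) (P : T -> T -> R) (Om : {set T}) : Prop :=
  forall x y, x \in Om -> y \notin Om -> P x y = 0.

End Defs.

(* Main.v *)
Require Import Defs.
From mathcomp Require Import all_boot all_order all_algebra.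
From mathcomp Require Import all_classical all_reals all_analysis.
From mathcomp Require Import ring lra.
Import Order.TTheory GRing.Theory Num.Theory.
Local Open Scope ring_scope.

Module Helpers.
Set Implicit Arguments. Unset Strict Implicit. Unset Printing Implicit Defensive.

Section Gen.
Variable R : realType.

Lemma cs_sq (I : finType) (u v : I -> R) :
  (\sum_i u i * v i) ^+ 2 <= (\sum_i u i ^+ 2) * (\sum_i v i ^+ 2).
Proof.
have H : 0 <= \sum_i \sum_j (u i * v j - u j * v i) ^+ 2.
  by apply: sumr_ge0 => i _; apply: sumr_ge0 => j _; exact: sqr_ge0.
have E : \sum_i \sum_j (u i * v j - u j * v i) ^+ 2 =
   2 * ((\sum_i u i ^+ 2) * (\sum_i v i ^+ 2) - (\sum_i u i * v i) ^+ 2).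
  transitivity (\sum_i (u i ^+ 2 * (\sum_j v j ^+ 2) + v i ^+ 2 * (\sum_j u j ^+ 2)
        - 2 * (u i * v i) * (\sum_j u j * v j))).
    apply: eq_bigr => i _.
    rewrite !mulr_sumr -!big_split /= -sumrB; apply: eq_bigr => j _; ring.
  rewrite sumrB big_split /= -!mulr_suml -mulr_sumr; ring.
lra.
Qed.

Lemma cs_sqrt (I : finType) (u v : I -> R) :
  \sum_i u i * v i <= Num.sqrt (\sum_i u i ^+ 2) * Num.sqrt (\sum_i v i ^+ 2).
Proof.
have hA : 0 <= \sum_i u i ^+ 2 by apply: sumr_ge0 => i _; exact: sqr_ge0.
rewrite -sqrtrM //.
apply: (le_trans (ler_norm _)).
rewrite -sqrtr_sqr; apply: ler_wsqrtr; exact: cs_sq.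
Qed.

Lemma ln_le_sub1 (x : R) : 0 < x -> ln x <= x - 1.
Proof.
move=> x0; have := @le_ln1Dx R (x - 1).
rewrite addrCA subrr addr0; apply; lra.
Qed.

Definition avgS (S : finType) (f : S -> R) := (#|S|%:R)^-1 * \sum_s f s.

Lemma pt_bound (n x a : R) : 2 <= n -> 0 <= x -> 0 < a -> x <= n * a ->
  xlogx (x ^+ 2) - x ^+ 2 * ln (a ^+ 2) - x ^+ 2 + a ^+ 2
    <= (5 + 8 * ln n) * (x - a) ^+ 2.
Proof.
move=> n2 x0 a0 xna.
have lnn : 0 <= ln n by apply: ln_ge0; lra.
have sq0 : 0 <= (x - a) ^+ 2 by exact: sqr_ge0.
rewrite /xlogx; case: eqP => [/eqP|/eqP xx0].
  rewrite sqrf_eq0 => /eqP ->; nra.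
have xp : 0 < x by rewrite lt_neqAle x0 andbT; apply: contra xx0 => /eqP <-; rewrite expr0n.
rewrite !lnXn // ?exprn_gt0 //.
have [x2a|x2a] := leP x (2 * a).
  have hl : ln x - ln a <= (x - a) / a.
    rewrite -ln_div ?posrE //.
    have := ln_le_sub1 (divr_gt0 xp a0).
    by rewrite mulrBl divff ?gt_eqF.
  have hl' : a * (ln x - ln a) <= x - a.
    by rewrite -(ler_pM2l a0) mulrCA divff ?gt_eqF // mulr1 in hl.
  have : a * (x ^+ 2 * (ln x *+ 2) - x ^+ 2 * ln a *+ 2 - x ^+ 2 + a ^+ 2)
         <= a * (5 * (x - a) ^+ 2).
    have e : a * (x ^+ 2 * (ln x *+ 2) - x ^+ 2 * ln a *+ 2 - x ^+ 2 + a ^+ 2)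
       = 2 * x ^+ 2 * (a * (ln x - ln a)) - a * x ^+ 2 + a ^+ 3.
      by rewrite !mulr2n; ring.
    rewrite e.
    have : 2 * x ^+ 2 * (a * (ln x - ln a)) <= 2 * x ^+ 2 * (x - a).
      by apply: ler_wpM2l => //; nra.
    nra.
  rewrite ler_pM2l // => h.
  nra.
have hl : ln x - ln a <= ln n.
  rewrite -ln_div ?posrE // ler_ln ?posrE //; first by rewrite ler_pdivrMr.
  exact: divr_gt0. lra.
have : x ^+ 2 <= 4 * (x - a) ^+ 2 by nra.
have : 2 * x ^+ 2 * (ln x - ln a) <= 2 * x ^+ 2 * ln n.
  by apply: ler_wpM2l => //; nra.
rewrite !mulr2n; nra.
Qed.

Lemma ln2_ge : 1 / 2 <= ln (2 : R).
Proof.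
have h := @ln_le_sub1 (2^-1 : R) ltac:(lra).
rewrite lnV ?posrE // in h; lra.
Qed.

Lemma sum_single (S : finType) (s0 : S) (g : S -> R) : #|S| = 1%N ->
  \sum_s g s = g s0.
Proof.
move=> h1; rewrite (bigD1 s0) //= big1 ?addr0 // => s /negP ne; exfalso; apply: ne.
have /fintype_le1P e : (#|S| <= 1)%N by rewrite h1.
by rewrite (e s0) (e s).
Qed.

Lemma fib_ent (S : finType) (f : S -> R) : (0 < #|S|)%N -> (forall s, 0 <= f s) ->
  avgS (fun s => xlogx (f s ^+ 2)) - xlogx (avgS (fun s => f s ^+ 2))
    <= (18 * ln (#|S|%:R)) * (avgS (fun s => f s ^+ 2) - (avgS f) ^+ 2).
Proof.
move=> Sp f0.
have /card_gt0P [s0 _] := Sp.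
have [c1|c2] := eqVneq #|S| 1%N.
  rewrite /avgS !(sum_single s0 _ c1) c1 invr1 !mul1r ln1; lra.
have n2' : (2 <= #|S|)%N by move: Sp c2; case: #|S| => [|[|]].
set n : R := #|S|%:R.
have n2 : 2 <= n by rewrite /n (ler_nat R 2).
have n0 : 0 < n by lra.
have lnn : 1 / 2 <= ln n.
  apply: (le_trans ln2_ge); rewrite ler_ln ?posrE //; lra.
set Sf := \sum_s f s.
set Sf2 := \sum_s f s ^+ 2.
rewrite /avgS -/n -/Sf -/Sf2.
set a := n^-1 * Sf. set M := n^-1 * Sf2.
have eSf : Sf = n * a by rewrite /a mulrA divff ?gt_eqF // mul1r.
have eSf2 : Sf2 = n * M by rewrite /M mulrA divff ?gt_eqF // mul1r.
have a0 : 0 <= a by rewrite /a; apply: mulr_ge0; [rewrite invr_ge0; lra| apply: sumr_ge0].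
have fle : forall s, f s <= n * a.
  move=> s; rewrite -eSf /Sf (bigD1 s) //= lerDl; exact: sumr_ge0.
have [az|ap] := eqVneq a 0.
  have fz : forall s, f s = 0.
    move=> s; apply/eqP; rewrite eq_le f0 andbT; have := fle s; rewrite az mulr0 //.
  have -> : \sum_s xlogx (f s ^+ 2) = 0 by apply: big1 => s _; rewrite fz expr0n /xlogx eqxx.
  have -> : M = 0 by rewrite /M /Sf2 big1 ?mulr0 // => s _; rewrite fz expr0n.
  rewrite az /xlogx !mulr0 eqxx; lra.
have apos : 0 < a by rewrite lt_neqAle eq_sym ap a0.
set c0 := 5 + 8 * ln n.
have key : \sum_s xlogx (f s ^+ 2) <=
     \sum_s (f s ^+ 2 * (ln (a ^+ 2) + 1 + c0) + f s * (- 2 * c0 * a) + (c0 * a ^+ 2 - a ^+ 2)).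
  apply: ler_sum => s _.
  have := pt_bound n2 (f0 s) apos (fle s); rewrite -/c0.
  have e : forall y : R, y ^+ 2 * (ln (a ^+ 2) + 1 + c0) + y * (- 2 * c0 * a) + (c0 * a ^+ 2 - a ^+ 2)
        = y ^+ 2 * ln (a ^+ 2) + y ^+ 2 - a ^+ 2 + c0 * (y - a) ^+ 2 by move=> y; ring.
  rewrite e; lra.
rewrite !big_split /= -!mulr_suml !sumr_const -/Sf -/Sf2 in key.
have e1 : forall (y : R) k, y *+ k = y * k%:R by move=> y k; rewrite mulr_natr.
rewrite [c0 *+ _]e1 [(- _) *+ _]e1 in key.
have cT : #|(xpredT : pred S)|%:R = n by [].
rewrite cT eSf eSf2 in key.
set X := \sum_s xlogx (f s ^+ 2) in key *.
have hX : n^-1 * X <= M * ln (a ^+ 2) + M - a ^+ 2 + c0 * (M - a ^+ 2).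
  have ni : 0 <= n^-1 by rewrite invr_ge0; lra.
  have := ler_wpM2l ni key.
  have -> : n * M * (ln (a ^+ 2) + 1 + c0) + n * a * (-2 * c0 * a) + (c0 * n * a ^+ 2 + - a ^+ 2 * n)
     = n * (M * ln (a ^+ 2) + M - a ^+ 2 + c0 * (M - a ^+ 2)) by ring.
  by rewrite mulrA mulVf ?gt_eqF // mul1r.
have aM : a ^+ 2 <= M.
  have := cs_sq f (fun _ => 1).
  under eq_bigr do rewrite mulr1.
  under [\sum_i 1 ^+ 2]eq_bigr do rewrite expr1n.
  rewrite sumr_const e1 cT mul1r -/Sf -/Sf2 eSf eSf2 => h.
  have : n * n * a ^+ 2 <= n * n * M by rewrite -[X in X <= _]mulrA [_ * M]mulrC; nra.
  by rewrite ler_pM2l ?mulr_gt0.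
have a2p : 0 < a ^+ 2 by rewrite exprn_gt0.
have Mp : 0 < M by lra.
have xM : xlogx M = M * ln M by rewrite /xlogx gt_eqF.
have lnM : M * ln (a ^+ 2) - M * ln M <= a ^+ 2 - M.
  have := ln_le_sub1 (divr_gt0 a2p Mp).
  rewrite ln_div ?posrE // => h.
  have := ler_wpM2l (ltW Mp) h.
  by rewrite mulrBr mulrBr mulrCA divff ?gt_eqF // mulr1 mulr1.
have c0le : c0 <= 18 * ln n by rewrite /c0; lra.
rewrite xM.
have hp : 0 <= (18 * ln n - c0) * (M - a ^+ 2) by apply: mulr_ge0; lra.
nra.
Qed.

Section AvgS.
Variable S : finType.
Hypothesis Sp : (0 < #|S|)%N.

Lemma nS_gt0 : 0 < (#|S|%:R : R).
Proof. by rewrite ltr0n. Qed.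

Lemma avgS_const (c : R) : avgS (fun _ : S => c) = c.
Proof.
rewrite /avgS sumr_const -[c *+ _]mulr_natr mulrCA.
have -> : (#|(xpredT : pred S)|%:R : R) = #|S|%:R by [].
by rewrite mulVf ?mulr1 // gt_eqF // nS_gt0.
Qed.

Lemma avgSB (f g : S -> R) : avgS (fun s => f s - g s) = avgS f - avgS g.
Proof. by rewrite /avgS sumrB mulrBr. Qed.

Lemma avgS_mono (f g : S -> R) : (forall s, f s <= g s) -> avgS f <= avgS g.
Proof.
move=> h; rewrite /avgS; apply: ler_wpM2l; first by rewrite invr_ge0 ler0n.
exact: ler_sum.
Qed.

Lemma avgS_ge0 (f : S -> R) : (forall s, 0 <= f s) -> 0 <= avgS f.
Proof. by move=> h; rewrite -(avgS_const 0); apply: avgS_mono. Qed.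

Lemma avgS_swap (b : S -> S -> R) :
  avgS (fun s => avgS (fun t => b s t)) = avgS (fun t => avgS (fun s => b s t)).
Proof.
rewrite /avgS !mulr_sumr.
transitivity (\sum_s \sum_t (#|S|%:R : R)^-1 * ((#|S|%:R : R)^-1 * b s t)).
  by apply: eq_bigr => s _; rewrite !mulr_sumr.
rewrite exchange_big /=.
by apply: eq_bigr => t _; rewrite !mulr_sumr.
Qed.

Lemma avg_sq_le (f : S -> R) : (avgS f) ^+ 2 <= avgS (fun s => f s ^+ 2).
Proof.
have n0 := nS_gt0.
have := cs_sq f (fun _ => 1).
under eq_bigr do rewrite mulr1.
under [\sum_i 1 ^+ 2]eq_bigr do rewrite expr1n.
rewrite sumr_const -[1 *+ _]mulr_natr mul1r.
have -> : (#|(xpredT : pred S)|%:R : R) = #|S|%:R by [].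
rewrite /avgS => h.
set n : R := #|S|%:R in h n0 *.
have un : n^-1 * n = 1 by rewrite mulVf // lt0r_neq0.
have u0 : 0 < n^-1 by rewrite invr_gt0.
set A := (\sum_i f i) in h *. set B := \sum_i f i ^+ 2 in h *.
rewrite exprMn.
have := ler_wpM2l (ltW (exprn_gt0 2 u0)) h.
have -> : n^-1 ^+ 2 * (B * n) = n^-1 * B * (n^-1 * n) by ring.
by rewrite un mulr1.
Qed.

Lemma sq_sum (g : S -> R) : (\sum_s g s) ^+ 2 = \sum_s \sum_s' g s * g s'.
Proof. by rewrite expr2 big_distrl; apply: eq_bigr => s _; rewrite big_distrr. Qed.

Lemma mink (b : S -> S -> R) : (forall s t, 0 <= b s t) ->
  avgS (fun t => (avgS (fun s => b s t)) ^+ 2)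
   <= (avgS (fun s => Num.sqrt (avgS (fun t => b s t ^+ 2)))) ^+ 2.
Proof.
move=> b0.
have n0 := nS_gt0.
set w : R := (#|S|%:R)^-1.
have w0 : 0 <= w by rewrite invr_ge0 ltW.
rewrite /avgS -/w.
have e1 : forall s, Num.sqrt (w * \sum_t b s t ^+ 2) = Num.sqrt w * Num.sqrt (\sum_t b s t ^+ 2).
  by move=> s; rewrite sqrtrM.
have eR : \sum_s Num.sqrt (w * \sum_t b s t ^+ 2) = Num.sqrt w * \sum_s Num.sqrt (\sum_t b s t ^+ 2).
  by rewrite mulr_sumr; apply: eq_bigr => s _; exact: e1.
have eL : \sum_t (w * \sum_s b s t) ^+ 2 = w ^+ 2 * \sum_t (\sum_s b s t) ^+ 2.
  by rewrite mulr_sumr; apply: eq_bigr => t _; rewrite exprMn.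
rewrite eR eL.
have -> : (w * (Num.sqrt w * \sum_s Num.sqrt (\sum_t b s t ^+ 2))) ^+ 2
   = w * (w ^+ 2 * (\sum_s Num.sqrt (\sum_t b s t ^+ 2)) ^+ 2).
  by rewrite !exprMn sqr_sqrtr // expr2; ring.
rewrite [w ^+ 2]expr2 -!mulrA.
do 3 (apply: ler_wpM2l => //).
rewrite sq_sum.
under eq_bigr do rewrite sq_sum.
have -> : \sum_t \sum_s \sum_s' b s t * b s' t = \sum_s \sum_s' \sum_t b s t * b s' t.
  by rewrite exchange_big; apply: eq_bigr => s _; rewrite exchange_big.
apply: ler_sum => s _.
apply: ler_sum => s' _.
exact: cs_sqrt.
Qed.
End AvgS.
End Gen.


Section Cfg.
Variables (R : realType) (S : finType) (N : nat).
Hypothesis Sp : (0 < #|S|)%N.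
Local Notation T := (config S N).

Lemma repl_at (x : T) i s : repl x i s i = s.
Proof. by rewrite /repl ffunE eqxx. Qed.

Lemma repl_same (x : T) i s t : repl (repl x i s) i t = repl x i t.
Proof. by apply/ffunP => j; rewrite !ffunE; case: eqP. Qed.

Lemma repl_id (x : T) i : repl x i (x i) = x.
Proof. by apply/ffunP => j; rewrite !ffunE; case: eqP => // ->. Qed.

Lemma repl_comm (x : T) i j s t : i != j ->
  repl (repl x i s) j t = repl (repl x j t) i s.
Proof.
move=> ij; apply/ffunP => k; rewrite !ffunE.
case: (k =P j) => [kj|kj]; case: (k =P i) => [ki|ki] //.
by move: ij; rewrite -kj -ki eqxx.
Qed.

Lemma reindex_repl i (H : T -> S -> R) :
  \sum_x \sum_s H (repl x i s) (x i) = \sum_x \sum_s H x s.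
Proof.
rewrite !pair_big /=.
pose phi (p : T * S) := (repl p.1 i p.2, p.1 i).
have phiK : involutive phi.
  by case=> x s; rewrite /phi /= repl_at repl_same repl_id.
rewrite [RHS](reindex_inj (inv_inj phiK)) /=.
by apply: eq_bigr => -[x s].
Qed.

Definition Ei (i : 'I_N) (h : T -> R) (x : T) : R := avgS (fun s => h (repl x i s)).

Fixpoint Al (l : seq 'I_N) (h : T -> R) : T -> R :=
  if l is i :: l' then Ei i (Al l' h) else h.

Definition Vi (i : 'I_N) (h : T -> R) (x : T) : R :=
  avgS (fun s => h (repl x i s)) - (avgS (fun s => Num.sqrt (h (repl x i s)))) ^+ 2.

Lemma sum_Ei i h : \sum_x Ei i h x = \sum_x h x.
Proof.
rewrite /Ei /avgS -mulr_sumr.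
have := reindex_repl i (fun y _ => h y) => /= ->.
under eq_bigr do rewrite sumr_const -[_ *+ _]mulr_natr.
rewrite -mulr_suml mulrA.
have -> : (#|(xpredT : pred S)|%:R : R) = #|S|%:R by [].
by rewrite mulrAC mulVf ?mul1r // lt0r_neq0 // nS_gt0.
Qed.

Lemma sum_Al l h : \sum_x Al l h x = \sum_x h x.
Proof. by elim: l => //= i l IH; rewrite sum_Ei. Qed.

Lemma Ei_mono i h h' : (forall x, h x <= h' x) -> forall x, Ei i h x <= Ei i h' x.
Proof. by move=> H x; apply: avgS_mono. Qed.

Lemma Al_mono l h h' : (forall x, h x <= h' x) -> forall x, Al l h x <= Al l h' x.
Proof. by elim: l => //= i l IH H; apply: Ei_mono; apply: IH. Qed.

Lemma Al_ge0 l h : (forall x, 0 <= h x) -> forall x, 0 <= Al l h x.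
Proof. elim: l => //= i l IH H x; apply: (avgS_ge0 Sp) => s; exact: IH. Qed.

Definition invc (j : 'I_N) (h : T -> R) := forall x t, h (repl x j t) = h x.

Lemma Ei_inv_self i h : invc i (Ei i h).
Proof. by move=> x t; rewrite /Ei /avgS; under eq_bigr do rewrite repl_same. Qed.

Lemma Ei_pres i j h : invc j h -> invc j (Ei i h).
Proof.
move=> hj; have [<-|ij] := eqVneq i j; first exact: Ei_inv_self.
move=> x t; rewrite /Ei /avgS; congr (_ * _); apply: eq_bigr => s _.
by rewrite -repl_comm // hj.
Qed.

Lemma Al_inv l h j : j \in l -> invc j (Al l h).
Proof.
elim: l => //= i l IH; rewrite in_cons; case/orP => [/eqP ->|jl].
  exact: Ei_inv_self.
by apply: Ei_pres; apply: IH.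
Qed.

Fixpoint ow (x y : T) (l : seq 'I_N) : T :=
  if l is j :: l' then repl (ow x y l') j (y j) else x.

Lemma owE x y l k : ow x y l k = if k \in l then y k else x k.
Proof.
elim: l => //= j l IH; rewrite ffunE in_cons IH.
by case: (k =P j) => [->|] //=.
Qed.

Lemma const_inv h : (forall j, invc j h) -> forall x y, h x = h y.
Proof.
move=> hi x y.
have -> : y = ow x y (enum 'I_N) by apply/ffunP => k; rewrite owE mem_enum.
elim: (enum 'I_N) => //= j l IH; by rewrite hi.
Qed.


Lemma eq_avgS (f g : S -> R) : (forall s, f s = g s) -> avgS f = avgS g.
Proof. by move=> e; rewrite /avgS; congr (_ * _); apply: eq_bigr => s _. Qed.

Lemma Al_enum h x : Al (enum 'I_N) h x = (#|T|%:R)^-1 * \sum_y h y.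
Proof.
have hc : forall y, Al (enum 'I_N) h y = Al (enum 'I_N) h x.
  move=> y; apply: const_inv => j; apply: Al_inv; by rewrite mem_enum.
have Tp : (0 < #|T|)%N by apply/card_gt0P; exists x.
rewrite -(sum_Al (enum 'I_N)).
under eq_bigr do rewrite hc.
rewrite sumr_const -[Al _ h x *+ _]mulr_natr.
have -> : (#|(xpredT : pred T)|%:R : R) = #|T|%:R by [].
by rewrite mulrCA mulVf ?mulr1 // lt0r_neq0 // ltr0n.
Qed.

Lemma Vi_ge0 i h x : (forall y, 0 <= h y) -> 0 <= Vi i h x.
Proof.
move=> h0; rewrite /Vi subr_ge0.
have := avg_sq_le Sp (fun s => Num.sqrt (h (repl x i s))).
have e : avgS (fun s => Num.sqrt (h (repl x i s)) ^+ 2) = avgS (fun s => h (repl x i s)).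
  by apply: eq_avgS => s; rewrite sqr_sqrtr.
by rewrite e.
Qed.

Lemma Vi_Ei i j h x : (forall y, 0 <= h y) -> Vi i (Ei j h) x <= Ei j (Vi i h) x.
Proof.
move=> h0.
have [<-|ij] := eqVneq j i.
  have -> : Vi j (Ei j h) x = 0.
    have f1 : avgS (fun s => Ei j h (repl x j s)) = avgS (fun _ : S => Ei j h x).
      by apply: eq_avgS => s; rewrite Ei_inv_self.
    have f2 : avgS (fun s => Num.sqrt (Ei j h (repl x j s))) = avgS (fun _ : S => Num.sqrt (Ei j h x)).
      by apply: eq_avgS => s; rewrite Ei_inv_self.
    rewrite /Vi f1 f2.
    rewrite !avgS_const // sqr_sqrtr ?subrr //.
    by apply: (avgS_ge0 Sp) => s.
  by apply: (avgS_ge0 Sp) => s; apply: Vi_ge0.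
pose a s t := h (repl (repl x i s) j t).
have e1 : Vi i (Ei j h) x = avgS (fun s => avgS (fun t => a s t))
     - (avgS (fun s => Num.sqrt (avgS (fun t => Num.sqrt (a s t) ^+ 2)))) ^+ 2.
  rewrite /Vi.
  have -> : avgS (fun s => Num.sqrt (Ei j h (repl x i s))) = avgS (fun s => Num.sqrt (avgS (fun t => Num.sqrt (a s t) ^+ 2))).
    by apply: eq_avgS => s; congr Num.sqrt; apply: eq_avgS => t; rewrite sqr_sqrtr // /a.
  by [].
have e2 : Ei j (Vi i h) x = avgS (fun t => avgS (fun s => a s t))
     - avgS (fun t => (avgS (fun s => Num.sqrt (a s t))) ^+ 2).
  rewrite /Ei -avgSB; apply: eq_avgS => t.
  have q : forall s, repl (repl x j t) i s = repl (repl x i s) j t.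
    by move=> s; rewrite repl_comm // eq_sym.
  have q1 : (fun s => h (repl (repl x j t) i s)) = (fun s => a s t) by apply: funext => s; rewrite q.
  have q2 : (fun s => Num.sqrt (h (repl (repl x j t) i s))) = (fun s => Num.sqrt (a s t)) by apply: funext => s; rewrite q.
  by rewrite /Vi q1 q2.
rewrite e1 e2 avgS_swap lerD2l lerN2.
apply: mink => // s t; exact: sqrtr_ge0.
Qed.

Lemma Vi_Al i l h x : (forall y, 0 <= h y) -> Vi i (Al l h) x <= Al l (Vi i h) x.
Proof.
move=> h0; elim: l x => //= j l IH x.
apply: (le_trans (Vi_Ei _ _ _ _)); first exact: Al_ge0.
exact: Ei_mono.
Qed.


Lemma fib_step i g x : (forall y, 0 <= g y) ->
  Ei i (fun y => xlogx (g y)) x - xlogx (Ei i g x) <= (18 * ln (#|S|%:R : R)) * Vi i g x.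
Proof.
move=> g0.
have := fib_ent Sp (f := fun s => Num.sqrt (g (repl x i s))) (fun s => sqrtr_ge0 _).
have e1 : avgS (fun s => xlogx (Num.sqrt (g (repl x i s)) ^+ 2)) = Ei i (fun y => xlogx (g y)) x.
  by apply: eq_avgS => s; rewrite sqr_sqrtr.
have e2 : avgS (fun s => Num.sqrt (g (repl x i s)) ^+ 2) = Ei i g x.
  by apply: eq_avgS => s; rewrite sqr_sqrtr.
by rewrite e1 e2.
Qed.

Lemma tele l h : (forall y, 0 <= h y) ->
  \sum_x xlogx (h x) - \sum_x xlogx (Al l h x)
    <= (18 * ln (#|S|%:R : R)) * \sum_(i <- l) \sum_x Vi i h x.
Proof.
move=> h0.
have c0 : 0 <= 18 * ln (#|S|%:R : R).
  by apply: mulr_ge0 => //; apply: ln_ge0; rewrite ler1n.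
elim: l => [|i l IH]; first by rewrite /= subrr big_nil mulr0.
rewrite big_cons mulrDr /=.
set g := Al l h.
have g0 : forall y, 0 <= g y by apply: Al_ge0.
have step : \sum_x xlogx (g x) - \sum_x xlogx (Ei i g x)
     <= 18 * ln (#|S|%:R : R) * \sum_x Vi i h x.
  rewrite -(sum_Ei i (fun y => xlogx (g y))) -sumrB mulr_sumr.
  apply: (le_trans (ler_sum _ (fun x _ => fib_step i x g0))).
  rewrite -!mulr_sumr; apply: ler_wpM2l => //.
  rewrite -(sum_Al l (Vi i h)); apply: ler_sum => x _; exact: Vi_Al.
have := lerD IH step.
rewrite /g => H; lra.
Qed.


Lemma var_avg (f : S -> R) :
  Defs.variance (@unif R S) f = avgS (fun s => f s ^+ 2) - (avgS f) ^+ 2.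
Proof.
have eE : forall g : S -> R, expect (@unif R S) g = avgS g.
  by move=> g; rewrite /expect /unif /avgS mulr_sumr.
rewrite /Defs.variance !eE.
set m := avgS f.
have -> : avgS (fun s => (f s - m) ^+ 2) = avgS (fun s => (f s ^+ 2 - (2 * m) * f s) + m ^+ 2).
  by apply: eq_avgS => s; ring.
have aD : forall g1 g2 : S -> R, avgS (fun s => g1 s + g2 s) = avgS g1 + avgS g2.
  by move=> g1 g2; rewrite /avgS big_split mulrDr.
have aZ : forall (c : R) (g : S -> R), avgS (fun s => c * g s) = c * avgS g.
  by move=> c g; rewrite /avgS -mulr_sumr mulrCA.
rewrite aD avgSB aZ avgS_const // -/m; ring.
Qed.

Lemma sum_delta (g : T -> R) (r : T) (c : R) :
  \sum_y c * (y == r)%:R * g y = c * g r.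
Proof.
rewrite (bigD1 r) //= eqxx mulr1 big1 ?addr0 // => y /negbTE ->.
by rewrite mulr0 mul0r.
Qed.

End Cfg.

End Helpers.
Import Helpers.

Lemma sumr_constF (R : realType) (I : finType) (c : R) : \sum_(i : I) c = #|I|%:R * c.
Proof. by rewrite sumr_const mulr_natl. Qed.

Theorem proposition2p2 (R : realType) :
  exists C : R, 0 < C /\
  forall (S : finType) (N : nat) (K : 'I_N -> config S N -> S -> S -> R)
         (Om G : {set config S N}) (gamma : R) (F : config S N -> R),
    (1 <= N)%N ->
    depends_on_rest K ->
    (forall i x, markov_kernel (K i x)) ->
    (forall i x, reversible (@unif R S) (K i x)) ->
    reversible (@unif R _) (coord_kernel K) ->
    invariant_set (coord_kernel K) Om ->
    0 < \sum_(x in Om) @unif R _ x ->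
    G \subset Om ->
    0 < gamma ->
    (forall (i : 'I_N) (x : config S N), (exists u : S, repl x i u \in G) ->
       spectral_gap_ge (@unif R S) (K i x) gamma) ->
    (forall x, 0 <= F x) ->
    (forall x, x \notin G -> F x = 0) ->
    entropy (@unif R _) (fun x => F x ^+ 2)
      <= C * (N%:R * ln (#|S|%:R) / gamma)
           * dirichlet (@unif R _) (coord_kernel K) F.
Proof.
exists 18; split; first by [].
move=> S N K Om G gamma F N1 Kdep Kmk Krev Prev Pinv Ompos GOm gpos gap F0 FG.
case: (pickP (fun x : config S N => true)) => [x0 _|none]; last first.
  exfalso; move: Ompos; rewrite big1 ?ltxx // => x _; by have := none x.
have Sp : (0 < #|S|)%N by apply/card_gt0P; exists (x0 (Ordinal N1)).
have Tp : (0 < #|config S N|)%N by apply/card_gt0P; exists x0.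
pose h := fun x => F x ^+ 2.
have h0 : forall y, 0 <= h y by move=> y; exact: sqr_ge0.
set nT : R := #|config S N|%:R.
have nT0 : 0 < nT by rewrite ltr0n.
set c := 18 * ln (#|S|%:R : R).
have c0 : 0 <= c by apply: mulr_ge0 => //; apply: ln_ge0; rewrite ler1n.
have gi0 : 0 <= gamma^-1 by rewrite invr_ge0 ltW.
have eEnt : entropy (@unif R _) h
    = nT^-1 * (\sum_x xlogx (h x) - \sum_x xlogx (Al (enum 'I_N) h x)).
  have eA := Al_enum Sp h.
  have -> : \sum_x xlogx (Al (enum 'I_N) h x) = nT * xlogx (nT^-1 * \sum_y h y).
    rewrite (eq_bigr (fun _ => xlogx (nT^-1 * \sum_y h y))) => [|x _]; last by rewrite eA.
    by rewrite sumr_constF.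
  rewrite /entropy /expect /unif -!mulr_sumr -/nT.
  have nn : nT^-1 * nT = 1 by rewrite mulVf // lt0r_neq0.
  rewrite mulrBr mulrA nn mul1r //.
pose Psi i y := 2^-1 * \sum_u K i y (y i) u * (F y - F (repl y i u)) ^+ 2.
pose Dfib i x := dirichlet (@unif R S) (K i x) (fun s => F (repl x i s)).
have hV : forall i x, Vi i h x <= gamma^-1 * Dfib i x.
  move=> i x.
  have eV : Vi i h x = Defs.variance (@unif R S) (fun s => F (repl x i s)).
    rewrite var_avg // /Vi.
    have -> : avgS (fun s => Num.sqrt (h (repl x i s))) = avgS (fun s => F (repl x i s)).
      by apply: eq_avgS => s; rewrite /h sqrtr_sqr ger0_norm.
    by [].
  rewrite eV.
  case: (boolP [exists s, repl x i s \in G]) => [/existsP [s hs]|hn].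
    exact: (gap i x (ex_intro _ s hs) (fun s => F (repl x i s))).
  have Fz : forall s, F (repl x i s) = 0.
    move=> s; apply: FG; apply: contra hn => hs; apply/existsP; by exists s.
  rewrite var_avg //.
  have -> : avgS (fun s => F (repl x i s) ^+ 2) = avgS (fun _ : S => 0).
    by apply: eq_avgS => s; rewrite Fz expr0n.
  have -> : avgS (fun s => F (repl x i s)) = avgS (fun _ : S => 0).
    by apply: eq_avgS => s; rewrite Fz.
  rewrite avgS_const // expr0n subrr /=.
  apply: mulr_ge0 => //; apply: mulr_ge0; first by rewrite invr_ge0.
  apply: sumr_ge0 => s _; apply: sumr_ge0 => u _; apply: mulr_ge0; last exact: sqr_ge0.
  apply: mulr_ge0; first by rewrite /unif invr_ge0.
  exact: (Kmk i x).1.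
have hD : forall i, \sum_x Dfib i x = \sum_x Psi i x.
  move=> i; rewrite -(sum_Ei Sp i (Psi i)); apply: eq_bigr => x _.
  rewrite /Dfib /dirichlet /Ei /avgS /Psi /unif !mulr_sumr; apply: eq_bigr => s _.
  rewrite !mulr_sumr; apply: eq_bigr => u _.
  rewrite Kdep repl_at repl_same; ring.
set Q := \sum_(i < N) \sum_x Psi i x.
have eD : dirichlet (@unif R _) (coord_kernel K) F = nT^-1 * N%:R^-1 * Q.
  have ey : forall x, \sum_y nT^-1 * (N%:R^-1 * \sum_(i < N) \sum_u K i x (x i) u * (y == repl x i u)%:R) * (F x - F y) ^+ 2
     = \sum_(i < N) \sum_u nT^-1 * N%:R^-1 * K i x (x i) u * (F x - F (repl x i u)) ^+ 2.
    move=> x.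
    transitivity (\sum_y \sum_(i < N) \sum_u (nT^-1 * N%:R^-1 * K i x (x i) u) * (y == repl x i u)%:R * (F x - F y) ^+ 2).
      apply: eq_bigr => y _; rewrite !mulr_sumr mulr_suml; apply: eq_bigr => i _.
      rewrite !mulr_sumr mulr_suml; apply: eq_bigr => u _; ring.
    rewrite exchange_big; apply: eq_bigr => i _; rewrite exchange_big; apply: eq_bigr => u _.
    exact: sum_delta.
  rewrite /dirichlet /coord_kernel /unif -/nT.
  rewrite (eq_bigr _ (fun x _ => ey x)) exchange_big /Q !mulr_sumr; apply: eq_bigr => i _.
  rewrite !mulr_sumr; apply: eq_bigr => x _.
  rewrite /Psi !mulr_sumr; apply: eq_bigr => u _; ring.
have E1 : entropy (@unif R _) h <= nT^-1 * c * (gamma^-1 * Q).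
  rewrite eEnt -mulrA; apply: ler_wpM2l; first by rewrite invr_ge0 ltW.
  apply: (le_trans (tele Sp (enum 'I_N) h0)); rewrite -/c.
  apply: ler_wpM2l => //.
  rewrite big_enum /= /Q mulr_sumr; apply: ler_sum => i _.
  rewrite -hD mulr_sumr; apply: ler_sum => x _; exact: hV.
have NN : N%:R^-1 * N%:R = 1 :> R by rewrite mulVf // pnatr_eq0 -lt0n.
rewrite eD.
have -> : 18 * (N%:R * ln (#|S|%:R : R) / gamma) * (nT^-1 * N%:R^-1 * Q)
   = (N%:R^-1 * N%:R) * (nT^-1 * c * (gamma^-1 * Q)) by rewrite /c; ring.
by rewrite NN mul1r.
Qed.
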